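(* Let $\mathbf{X}\sim\mathcal{MSP}(\boldsymbol{\mu},\mathbf{K})$ be a $p$-variate $L^2$-continuous process on a compact interval $\mathcal{T}$, $P=\{1,\dots,p\}$, and let $(\pi_i,\boldsymbol{\psi}_i)$, $i=1,\dots,M$, be the $M$ largest eigenpairs of its covariance operator with $\pi_M>0$; write $\psi_{i,k}=\boldsymbol{\psi}_i'\mathbf{e}_k$. For $S\subseteq P$ let $\hat{\mathbf{X}}^S=(\hat X^S_1,\dots,\hat X^S_p)'$ with $\hat X^S_j=X_j$ if $j\in S$ and $\hat X^S_j=\mu_j$ if $j\notin S$, and let $\Delta_k\mathrm{fMMD}^2(\hat{\mathbf{X}}^S,\boldsymbol{\mu};\mathbf{K},M)=\mathrm{fMMD}^2(\hat{\mathbf{X}}^{S\cup\{k\}},\boldsymbol{\mu};\mathbf{K},M)-\mathrm{fMMD}^2(\hat{\mathbf{X}}^S,\boldsymbol{\mu};\mathbf{K},M)$. Then $$\theta_k(\mathbf{X},\boldsymbol{\mu};\mathbf{K},M):=\sum_{S\subseteq P\setminus\{k\}}\frac{|S|!(p-|S|-1)!}{p!}\Delta_k\mathrm{fMMD}^2(\hat{\mathbf{X}}^S,\boldsymbol{\mu};\mathbf{K},M)=\sum_{i=1}^M\frac{1}{\pi_i}\langle X_k-\mu_k,\psi_{i,k}\rangle\langle\mathbf{X}-\boldsymbol{\mu},\boldsymbol{\psi}_i\rangle.$$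
   Context: $\mathcal{H}=L^2(\mathcal{T})^p$ with $\langle\mathbf{x},\mathbf{y}\rangle=\sum_j\int_{\mathcal{T}}x_jy_j$; for scalar functions $\langle f,g\rangle=\int_{\mathcal{T}}fg$. $\mathbf{X}\sim\mathcal{MSP}(\boldsymbol{\mu},\mathbf{K})$: mean $\boldsymbol{\mu}(t)=E\mathbf{X}(t)$, covariance kernel $\mathbf{K}(s,t)=[\mathrm{Cov}(X_i(s),X_j(t))]$, covariance operator $\mathcal{C}\mathbf{x}(s)=\int\mathbf{K}(s,t)\mathbf{x}(t)dt$ with orthonormal eigenfunctions $\boldsymbol{\psi}_i$ and nonincreasing eigenvalues $\pi_i$. $\mathrm{fMMD}^2(\mathbf{Y},\boldsymbol{\mu};\mathbf{K},M)=\sum_{i=1}^M\pi_i^{-1}\langle\mathbf{Y}-\boldsymbol{\mu},\boldsymbol{\psi}_i\rangle^2$. $\mathbf{e}_k$ is the $k$th canonical basis vector of $\mathbb{R}^p$. *)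

(* Defs.v *)
From HB Require Import structures.
From mathcomp Require Import all_boot all_order all_algebra.
From mathcomp Require Import all_classical all_reals all_analysis.
Set Implicit Arguments. Unset Strict Implicit. Unset Printing Implicit Defensive.
Import Order.TTheory GRing.Theory Num.Theory.
Import numFieldNormedType.Exports.
Local Open Scope classical_set_scope.
Local Open Scope ring_scope.

Section Defs.
Variable R : realType.
Notation leb := (@lebesgue_measure R).

Definition Tint (a b : R) : set R := `[a, b].

Definition L2on (a b : R) (f : R -> R) : Prop :=
  measurable_fun (Tint a b) f /\
  leb.-integrable (Tint a b) (fun t => ((f t) ^+ 2)%:E).

Definition ip (a b : R) (f g : R -> R) : R :=
  Rintegral leb (Tint a b) (fun t => f t * g t).

Definition ipH (a b : R) (p : nat) (x y : 'I_p -> R -> R) : R :=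
  \sum_(j < p) ip a b (x j) (y j).

Definition subH (p : nat) (x y : 'I_p -> R -> R) : 'I_p -> R -> R :=
  fun j t => x j t - y j t.

Definition fMMD2 (a b : R) (p M : nat) (pi : 'I_M -> R)
  (psi : 'I_M -> 'I_p -> R -> R) (Y mu : 'I_p -> R -> R) : R :=
  \sum_(i < M) (pi i)^-1 * (ipH a b (subH Y mu) (psi i)) ^+ 2.

Definition Xhat (p : nat) (S : {set 'I_p}) (X mu : 'I_p -> R -> R) :
  'I_p -> R -> R := fun j => if j \in S then X j else mu j.

Definition theta (a b : R) (p M : nat) (pi : 'I_M -> R)
  (psi : 'I_M -> 'I_p -> R -> R) (k : 'I_p) (X mu : 'I_p -> R -> R) : R :=
  \sum_(S : {set 'I_p} | k \notin S)
    ((factorial #|S| * factorial (p - #|S| - 1))%:R / (factorial p)%:R) *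
    (fMMD2 a b pi psi (Xhat (k |: S) X mu) mu - fMMD2 a b pi psi (Xhat S X mu) mu).

Section Process.
Context {d : measure_display} {Omega : measurableType d}.
Variable P : probability Omega R.
Variable p : nat.
Variable X : Omega -> 'I_p -> R -> R.

Definition meanf : 'I_p -> R -> R :=
  fun j t => Rintegral P setT (fun w => X w j t).

Definition covK (j l : 'I_p) (s t : R) : R :=
  Rintegral P setT (fun w => (X w j s - meanf j s) * (X w l t - meanf l t)).

Definition covop (a b : R) (x : 'I_p -> R -> R) : 'I_p -> R -> R :=
  fun j s => \sum_(l < p) Rintegral leb (Tint a b) (fun t => covK j l s t * x l t).

Definition second_order : Prop :=
  forall j t, measurable_fun setT (fun w => X w j t) /\
    P.-integrable setT (fun w => ((X w j t) ^+ 2)%:E).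

Definition L2_continuous (a b : R) : Prop :=
  forall (j : 'I_p) (t0 e : R), t0 \in Tint a b -> 0 < e ->
    exists2 dl : R, 0 < dl & forall t, t \in Tint a b -> `|t - t0| < dl ->
      Rintegral P setT (fun w => (X w j t - X w j t0) ^+ 2) < e.

Definition paths_in_H (a b : R) : Prop :=
  forall w j, L2on a b (X w j).

Definition is_eigen (a b : R) (lam : R) (phi : 'I_p -> R -> R) : Prop :=
  (forall j, L2on a b (phi j)) /\
  forall j, {ae leb, forall s, Tint a b s -> covop a b phi j s = lam * phi j s}.

(* (pi_i, psi_i), i < M, are the M largest eigenpairs (orthonormal
   eigenfunctions, nonincreasing eigenvalues, and no other eigenvalue with an
   eigenfunction orthogonal to all psi_i exceeds pi_M) *)
Definition top_eigenpairs (a b : R) (M : nat) (pi : 'I_M -> R)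
    (psi : 'I_M -> 'I_p -> R -> R) : Prop :=
  [/\ forall i, is_eigen a b (pi i) (psi i),
      forall i i', ipH a b (psi i) (psi i') = (i == i')%:R,
      forall i i' : 'I_M, (i <= i')%N -> pi i' <= pi i &
      forall (lam : R) (phi : 'I_p -> R -> R), is_eigen a b lam phi ->
        ipH a b phi phi != 0 -> (forall i, ipH a b phi (psi i) = 0) ->
        forall i : 'I_M, i.+1 = M -> lam <= pi i].

End Process.
End Defs.

(* Main.v *)
Require Import Defs.
From HB Require Import structures.
From mathcomp Require Import all_boot all_order all_algebra.
From mathcomp Require Import all_classical all_reals all_analysis.
From mathcomp Require Import ring lra zify.
Set Implicit Arguments. Unset Strict Implicit. Unset Printing Implicit Defensive.
Import Order.TTheory GRing.Theory Num.Theory.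
Local Open Scope ring_scope.

Section C.
Variable R : realFieldType.
Variable p : nat.
Variable k : 'I_p.

Definition w (S : {set 'I_p}) : R :=
  ((factorial #|S| * factorial (p - #|S| - 1))%:R / (factorial p)%:R).

Lemma card_lt (S : {set 'I_p}) : k \notin S -> (#|S| < p)%N.
Proof.
move=> kS; have := cardsC S; rewrite card_ord => E.
have : (0 < #|~: S|)%N by apply/card_gt0P; exists k; rewrite inE.
lia.
Qed.

Definition g (S : {set 'I_p}) : {set 'I_p} := ((~: S) :\ k) :|: (S :&: [set k]).

Lemma gK : involutive g.
Proof.
move=> S; apply/setP => x; rewrite /g !inE.
by case: (x == k); case: (x \in S).
Qed.

Lemma card_g (S : {set 'I_p}) : k \notin S -> #|g S| = (p - #|S| - 1)%N.
Proof.
move=> kS.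
have -> : g S = (~: S) :\ k.
  apply/setP => x; rewrite /g !inE; case: eqP => [->|] /=; rewrite ?(negbTE kS) ?andbF ?orbF //.
have E1 : #|~: S| = (#|~: S :\ k|).+1 by rewrite (cardsD1 k (~: S)) inE kS.
have E2 : (#|S| + #|~: S|)%N = p by rewrite cardsC card_ord. lia.
Qed.

Lemma w_g (S : {set 'I_p}) : k \notin S -> w (g S) = w S.
Proof.
move=> kS; rewrite /w card_g //; have := card_lt kS => lt.
by rewrite mulnC; congr (_%:R / _); congr (_ * _)%N; congr factorial; lia.
Qed.

Lemma half_sym j : j != k ->
  \sum_(S : {set 'I_p} | (k \notin S) && (j \in S)) w S =
  \sum_(S : {set 'I_p} | (k \notin S) && (j \notin S)) w S.
Proof.
move=> jk; rewrite (reindex_inj (can_inj gK)) /=.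
have kg : forall S, (k \in g S) = (k \in S).
  by move=> S; rewrite /g !inE eqxx; case: (k \in S).
have jg : forall S, (j \in g S) = (j \notin S).
  by move=> S; rewrite /g !inE (negbTE jk) /= andbF orbF ?andbT.
apply: eq_big => S; first by rewrite kg jg.
by rewrite kg => /andP[kS _]; rewrite w_g.
Qed.

Definition ws (s : nat) : R := ((factorial s * factorial (p - s - 1))%:R / (factorial p)%:R).

Lemma total : \sum_(S : {set 'I_p} | k \notin S) w S = 1.
Proof.
have p0 : (0 < p)%N by apply: leq_ltn_trans (ltn_ord k).
have step : forall S : {set 'I_p}, k \notin S -> w S = \sum_(s < p) (#|S| == s)%:R * ws s.
  move=> S kS; rewrite (bigD1 (Ordinal (card_lt kS))) //= eqxx mul1r big1 ?addr0 //.
  move=> s; rewrite -val_eqE /= eq_sym => /negbTE ->; by rewrite mul0r.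
rewrite (eq_bigr _ step) exchange_big /=.
have -> : \sum_(s < p) \sum_(S : {set 'I_p} | k \notin S) (#|S| == s)%:R * ws s =
          \sum_(s < p) (p.-1)`!%:R / p`!%:R.
  apply: eq_bigr => s _; rewrite -big_distrl /=.
  have -> : \sum_(S : {set 'I_p} | k \notin S) ((#|S| == s)%:R : R) =
            \sum_(S in [set S : {set 'I_p} | (S \subset [set~ k]) && (#|S| == s)]) 1.
    rewrite big_mkcond [RHS]big_mkcond /=; apply: eq_bigr => S _; rewrite inE.
    have -> : (S \subset [set~ k]) = (k \notin S).
      apply/fintype.subsetP/idP => [H|H x xS]; first by apply/negP => /H; rewrite !inE eqxx.
      by rewrite !inE; apply: contraNneq H => <-.
    by case: (k \in S); case: (#|S| == s).
  rewrite sumr_const cards_draws cardsC1 card_ord /ws.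
  have sp : (s <= p.-1)%N by have := ltn_ord s; lia.
  have E : (p - s - 1 = p.-1 - s)%N by lia.
  by rewrite E mulrA -natrM bin_fact.
rewrite sumr_const card_ord -[_ *+ p]mulr_natl mulrA -natrM.
have -> : p`! = (p * (p.-1)`!)%N by case: (p) p0.
by rewrite divff // pnatr_eq0 -lt0n muln_gt0 p0 fact_gt0.
Qed.
Lemma core (v : 'I_p -> R) :
  \sum_(S : {set 'I_p} | k \notin S)
     w S * ((\sum_(j in k |: S) v j) ^+ 2 - (\sum_(j in S) v j) ^+ 2) =
  v k * \sum_j v j.
Proof.
set A := fun S : {set 'I_p} => \sum_(j in S) v j.
have h1 : forall S : {set 'I_p}, k \notin S ->
    w S * ((\sum_(j in k |: S) v j) ^+ 2 - (\sum_(j in S) v j) ^+ 2) =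
    w S * (v k ^+ 2) + 2 * v k * (w S * A S).
  move=> S kS; rewrite big_setU1 //= /A; ring.
rewrite (eq_bigr _ h1) big_split /= -big_distrl /= total mul1r -big_distrr /=.
have h2 : \sum_(S : {set 'I_p} | k \notin S) w S * A S =
          \sum_j v j * \sum_(S : {set 'I_p} | (k \notin S) && (j \in S)) w S.
  rewrite (eq_bigr (fun S : {set 'I_p} => \sum_j (if j \in S then w S * v j else 0))); last first.
    by move=> S _; rewrite /A big_distrr /= big_mkcond.
  rewrite exchange_big /=; apply: eq_bigr => j _.
  by rewrite mulrC big_distrl /= big_mkcondr.
have hk : \sum_(S : {set 'I_p} | (k \notin S) && (k \in S)) w S = 0.
  by rewrite big_pred0 // => S; case: (k \in S).
have hj : forall j, j != k -> \sum_(S : {set 'I_p} | (k \notin S) && (j \in S)) w S = 2^-1.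
  move=> j jk; have := total; rewrite (bigID (fun S : {set 'I_p} => j \in S)) /= -half_sym // => H.
  have H2 : (2 : R) != 0 by rewrite pnatr_eq0.
  apply: (mulfI H2); rewrite divff // mulr_natl mulr2n; exact: H.
rewrite h2 (bigD1 k) //= hk [in RHS](bigD1 k) //=.
rewrite (eq_bigr (fun j => v j * 2^-1)); last by move=> j jk; rewrite hj.
rewrite -big_distrl /=.
have H2 : (2 : R) != 0 by rewrite pnatr_eq0.
by field.
Qed.
End C.

Lemma ip_zero (R : realType) (a b : R) (f g : R -> R) :
  ip a b (fun t => f t - f t) g = 0.
Proof.
rewrite /ip /Rintegral integral0_eq //= => t _; by rewrite subrr mul0r.
Qed.

Theorem proposition3 (R : realType) (d : measure_display) (Omega : measurableType d)
  (P : probability Omega R) (p : nat) (X : Omega -> 'I_p -> R -> R)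
  (a b : R) (M : nat) (pi : 'I_M -> R) (psi : 'I_M -> 'I_p -> R -> R)
  (k : 'I_p) :
  a < b ->
  second_order P X ->
  L2_continuous P X a b ->
  paths_in_H X a b ->
  (0 < M)%N ->
  top_eigenpairs P X a b pi psi ->
  (forall i : 'I_M, i.+1 = M -> 0 < pi i) ->
  forall w : Omega,
    theta a b pi psi k (X w) (meanf P X) =
    \sum_(i < M) (pi i)^-1 * ip a b (X w k - meanf P X k) (psi i k) *
                 ipH a b (subH (X w) (meanf P X)) (psi i).
Proof.
move=> _ _ _ _ _ _ _ w0.
set mu := meanf P X; set Xw := X w0.
pose c i j := ip a b (subH Xw mu j) (psi i j).
have hat : forall (S : {set 'I_p}) i,
    ipH a b (subH (Xhat S Xw mu) mu) (psi i) = \sum_(j in S) c i j.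
  move=> S i; rewrite /ipH [RHS]big_mkcond; apply: eq_bigr => j _.
  rewrite /subH /Xhat /c; case: (j \in S) => //; exact: ip_zero.
have hF : forall S : {set 'I_p}, fMMD2 a b pi psi (Xhat S Xw mu) mu =
    \sum_(i < M) (pi i)^-1 * (\sum_(j in S) c i j) ^+ 2.
  by move=> S; apply: eq_bigr => i _; rewrite hat.
rewrite /theta.
rewrite (eq_bigr (fun S : {set 'I_p} => \sum_(i < M) (pi i)^-1 *
    (@w R p S * ((\sum_(j in k |: S) c i j) ^+ 2 - (\sum_(j in S) c i j) ^+ 2)))); last first.
  move=> S _; rewrite !hF -sumrB big_distrr /=; apply: eq_bigr => i _.
  rewrite /w; ring.
rewrite exchange_big /=; apply: eq_bigr => i _.
rewrite -big_distrr /= core.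
have -> : ip a b (Xw k - mu k) (psi i k) = c i k by [].
by rewrite mulrA.
Qed.
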